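(* Let $k$ be any field, let $H=\bigoplus_{n\ge0}H^n$ be a graded Hopf algebra with finite-dimensional homogeneous components, and let $L=\bigoplus_{n\ge0}(H^n)^*$ be its graded dual Hopf algebra. Assume $H^0=H_0$ is both cosemisimple and semisimple (so that $L^0$ is also). Then the following are equivalent: (i) $H$ is coradically graded and is generated as an algebra by $H^0$ and $H^1$; (ii) $L$ is coradically graded and is generated as an algebra by $L^0$ and $L^1$.
   Context: A graded coalgebra $C=\bigoplus_{i\ge0}C(i)$ is coradically graded if $C(0)=C_0$ (the coradical) and $C_1=C(0)\oplus C(1)$, where $C_0\subseteq C_1\subseteq\cdots$ is the coradical filtration. $H_0$ denotes the coradical of $H$. The graded dual $L$ has $L^n=(H^n)^*$ with the Hopf algebra structure dual to that of $H$. *)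

(* Defs.v *)
(* Graded Hopf algebras with finite-dimensional homogeneous
   components, presented by structure constants with respect to a chosen
   homogeneous basis (every such Hopf algebra is isomorphic to one of these). *)
From HB Require Import structures.
From mathcomp Require Import all_boot all_order all_algebra.
Set Implicit Arguments. Unset Strict Implicit. Unset Printing Implicit Defensive.
Import GRing.Theory.
Local Open Scope ring_scope.

(* H = (+)_n H^n, H^n = k^(gdim n) with basis e^n_0 .. e^n_(gdim n - 1).
   gmc i j n a b c = coefficient of e^n_c in e^i_a * e^j_b
   gdc n i j c a b = coefficient of e^i_a (x) e^j_b in Delta(e^n_c)
   gun u           = coefficient of e^0_u in 1   (1 lies in H^0)
   gcu u           = epsilon(e^0_u)               (epsilon vanishes on H^n, n>0)
   gan n a a'      = coefficient of e^n_a' in S(e^n_a)   (S graded) *)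
Record gdata (k : fieldType) := GData {
  gdim : nat -> nat;
  gmc : forall i j n, 'I_(gdim i) -> 'I_(gdim j) -> 'I_(gdim n) -> k;
  gdc : forall n i j, 'I_(gdim n) -> 'I_(gdim i) -> 'I_(gdim j) -> k;
  gun : 'I_(gdim 0) -> k;
  gcu : 'I_(gdim 0) -> k;
  gan : forall n, 'I_(gdim n) -> 'I_(gdim n) -> k }.
Arguments gdim {k} A n : rename.
Arguments gmc {k} A i j n a b c : rename.
Arguments gdc {k} A n i j c a b : rename.
Arguments gun {k} A u : rename.
Arguments gcu {k} A u : rename.
Arguments gan {k} A n a a' : rename.

Section Defs.
Variable k : fieldType.
Implicit Type A : gdata k.

Definition cuv A n : 'I_(gdim A n) -> k :=
  match n as m return 'I_(gdim A m) -> k with 0 => gcu A | _.+1 => fun _ => 0 end.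
Definition unv A n : 'I_(gdim A n) -> k :=
  match n as m return 'I_(gdim A m) -> k with 0 => gun A | _.+1 => fun _ => 0 end.

Definition is_ghopf A : Prop :=
  (forall i j n a b c, (i + j)%N != n -> gmc A i j n a b c = 0) /\
  (forall n i j c a b, (i + j)%N != n -> gdc A n i j c a b = 0) /\
  (forall i j l n a b g c,
     \sum_(e < gdim A (i + j)) gmc A i j (i + j) a b e * gmc A (i + j) l n e g c
   = \sum_(f < gdim A (j + l)) gmc A j l (j + l) b g f * gmc A i (j + l) n a f c) /\
  (forall j b c, \sum_(u < gdim A 0) gun A u * gmc A 0 j j u b c = (b == c)%:R) /\
  (forall i a c, \sum_(u < gdim A 0) gmc A i 0 i a u c * gun A u = (a == c)%:R) /\
  (forall n i j l c a b g,
     \sum_(e < gdim A (i + j)) gdc A n (i + j) l c e g * gdc A (i + j) i j e a b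
   = \sum_(f < gdim A (j + l)) gdc A n i (j + l) c a f * gdc A (j + l) j l f b g) /\
  (forall n c b, \sum_(u < gdim A 0) gcu A u * gdc A n 0 n c u b = (c == b)%:R) /\
  (forall n c b, \sum_(u < gdim A 0) gdc A n n 0 c b u * gcu A u = (c == b)%:R) /\
  (forall i j p q a b x y,
     \sum_(c < gdim A (i + j)) gmc A i j (i + j) a b c * gdc A (i + j) p q c x y
   = \sum_(i1 < i.+1) \sum_(i2 < i.+1) \sum_(j1 < j.+1) \sum_(j2 < j.+1)
       \sum_(a1 < gdim A i1) \sum_(a2 < gdim A i2)
       \sum_(b1 < gdim A j1) \sum_(b2 < gdim A j2)
       gdc A i i1 i2 a a1 a2 * gdc A j j1 j2 b b1 b2
       * gmc A i1 j1 p a1 b1 x * gmc A i2 j2 q a2 b2 y) /\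
  (forall a b, \sum_(c < gdim A 0) gmc A 0 0 0 a b c * gcu A c = gcu A a * gcu A b) /\
  (forall x y, \sum_(c < gdim A 0) gun A c * gdc A 0 0 0 c x y = gun A x * gun A y) /\
  (\sum_(u < gdim A 0) gun A u * gcu A u = 1) /\
  (forall n m c z,
     \sum_(i < n.+1) \sum_(j < n.+1) \sum_(a < gdim A i) \sum_(b < gdim A j)
       \sum_(a' < gdim A i) gdc A n i j c a b * gan A i a a' * gmc A i j m a' b z
   = @cuv A n c * @unv A m z) /\
  (forall n m c z,
     \sum_(i < n.+1) \sum_(j < n.+1) \sum_(a < gdim A i) \sum_(b < gdim A j)
       \sum_(b' < gdim A j) gdc A n i j c a b * gan A j b b' * gmc A i j m a b' z
   = @cuv A n c * @unv A m z).

(* Graded dual L = (+)_n (H^n)^*, written in the dual bases. *)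
Definition gdual A : gdata k :=
  @GData k (gdim A)
    (fun i j n a b c => gdc A n i j c a b)
    (fun n i j c a b => gmc A i j n a b c)
    (gcu A) (gun A)
    (fun n c a => gan A n a c).

(* Elements of H: finitely supported families of homogeneous components. *)
Definition gvec A := forall n, 'rV[k]_(gdim A n).
Definition fsupp A (x : gvec A) : Prop := exists N, forall n, (N <= n)%N -> x n = 0.
Definition gzero A : gvec A := fun n => 0.
Definition homog A (d : nat) (x : gvec A) : Prop := forall m, m != d -> x m = 0.

Definition gmul A (x y : gvec A) : gvec A := fun n =>
  \row_c \sum_(i < n.+1) \sum_(j < n.+1) \sum_(a < gdim A i) \sum_(b < gdim A j)
     x i 0 a * y j 0 b * gmc A i j n a b c.

(* Elements of H (x) H = (+)_(i,j) H^i (x) H^j, with H^i (x) H^j = matrices. *)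
Definition gten A := forall i j, 'M[k]_(gdim A i, gdim A j).
Definition gcomul A (x : gvec A) : gten A := fun i j =>
  \matrix_(a, b) \sum_(n < (i + j).+1) \sum_(c < gdim A n) x n 0 c * gdc A n i j c a b.

Definition inTens A (P Q : gvec A -> Prop) (t : gten A) : Prop :=
  exists m (u v : 'I_m -> gvec A), (forall r, P (u r) /\ Q (v r)) /\
    forall i j, t i j = \sum_(r < m) (u r i)^T *m (v r j).

Definition subspace A (P : gvec A -> Prop) : Prop :=
  (forall x, P x -> fsupp x) /\ P (gzero A) /\
  forall (c : k) x y, P x -> P y -> P (fun n => c *: x n + y n).

Definition subcoalg A (D : gvec A -> Prop) : Prop :=
  subspace D /\ forall x, D x -> inTens D D (gcomul x).

Definition simple_subcoalg A (D : gvec A -> Prop) : Prop :=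
  subcoalg D /\ (exists x, D x /\ exists n, x n != 0) /\
  forall E, subcoalg E -> (forall x, E x -> D x) ->
    (forall x, E x -> forall n, x n = 0) \/ (forall x, D x -> E x).

Definition sum_of_simples A (D : gvec A -> Prop) (x : gvec A) : Prop :=
  exists m (Ds : 'I_m -> gvec A -> Prop) (y : 'I_m -> gvec A),
    (forall r, simple_subcoalg (Ds r) /\ (forall z, Ds r z -> D z) /\ Ds r (y r)) /\
    forall n, x n = \sum_(r < m) y r n.

Definition coradical A (x : gvec A) : Prop := sum_of_simples (@fsupp A) x.

Definition cosemisimple A (D : gvec A -> Prop) : Prop :=
  subcoalg D /\ forall x, D x -> sum_of_simples D x.

(* second term of the coradical filtration: Delta^-1(H (x) H_0 + H_0 (x) H) *)
Definition corad1 A (x : gvec A) : Prop :=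
  fsupp x /\ exists t1 t2 : gten A,
    inTens (@fsupp A) (@coradical A) t1 /\ inTens (@coradical A) (@fsupp A) t2 /\
    forall i j, gcomul x i j = t1 i j + t2 i j.

Definition coradically_graded A : Prop :=
  (forall x : gvec A, homog 0 x <-> coradical x) /\
  (forall x : gvec A, corad1 x <->
     exists y z, homog 0 y /\ homog 1 z /\ forall n, x n = y n + z n).

Definition gen01 A : Prop :=
  forall P : gvec A -> Prop, subspace P ->
    (forall x y, P x -> P y -> P (gmul x y)) ->
    (forall x, homog 0 x -> P x) -> (forall x, homog 1 x -> P x) ->
    forall x, fsupp x -> P x.

Definition mul0 A (x y : 'rV[k]_(gdim A 0)) : 'rV[k]_(gdim A 0) :=
  \row_c \sum_(a < gdim A 0) \sum_(b < gdim A 0) x 0 a * y 0 b * gmc A 0 0 0 a b c.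
Definition left_ideal0 A (I : 'M[k]_(gdim A 0)) : Prop :=
  forall x y : 'rV[k]_(gdim A 0), (x <= I)%MS -> (mul0 y x <= I)%MS.
Definition semisimple0 A : Prop :=
  forall I : 'M[k]_(gdim A 0), left_ideal0 I -> exists J : 'M[k]_(gdim A 0), left_ideal0 J /\
    (I :&: J == (0 : 'M[k]_(gdim A 0)))%MS /\ (1%:M <= I + J)%MS.

End Defs.

(* Main.v *)
Require Import Defs.
From mathcomp Require Import all_boot all_order all_algebra.
From Stdlib Require Import FunctionalExtensionality Classical ClassicalEpsilon.
From mathcomp Require Import zify ring.
Set Implicit Arguments. Unset Strict Implicit. Unset Printing Implicit Defensive.
Import GRing.Theory.
Local Open Scope ring_scope.

Section Basics.
Variable k : fieldType.
Variable A : gdata k.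

Lemma sum_single (F : nat -> k) N n :
  (forall m, m != n -> F m = 0) ->
  \sum_(m < N) F m = if (n < N)%N then F n else 0.
Proof.
move=> HF; case: ifP => hn.
  rewrite (bigD1 (Ordinal hn)) //= big1 ?addr0 // => m hm; apply: HF.
  by apply: contra hm => /eqP e; apply/eqP/val_inj.
by rewrite big1 // => m _; apply: HF; apply: contraFN hn => /eqP <-.
Qed.

Lemma sum_delta_l N (F : 'I_N -> k) (b : 'I_N) :
  \sum_(c < N) F c * (b == c)%:R = F b.
Proof.
rewrite (bigD1 b) //= eqxx mulr1 big1 ?addr0 // => c hc.
by rewrite eq_sym (negbTE hc) mulr0.
Qed.

Lemma sum_delta_r N (F : 'I_N -> k) (b : 'I_N) :
  \sum_(c < N) F c * (c == b)%:R = F b.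
Proof.
by rewrite -[RHS](sum_delta_l F b); apply: eq_bigr => c _; rewrite eq_sym.
Qed.

Definition gvecn n (x : 'rV[k]_(gdim A n)) : gvec A := fun m =>
  \row_(c < gdim A m) \sum_(c' < gdim A n) x 0 c' * ((m == n) && (c == c' :> nat))%:R.

Lemma gvecn_eq n x : @gvecn n x n = x.
Proof.
apply/rowP => c; rewrite mxE eqxx /=.
rewrite -[RHS](sum_delta_l (fun c' => x 0 c') c); apply: eq_bigr => c' _.
by rewrite (inj_eq val_inj).
Qed.

Lemma gvecn_neq n x m : m != n -> @gvecn n x m = 0.
Proof.
move=> hm; apply/rowP => c; rewrite !mxE big1 // => c' _.
by rewrite (negbTE hm) mulr0.
Qed.

Definition ek n (a : 'I_(gdim A n)) : gvec A := gvecn (delta_mx 0 a).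

Lemma homog_gvecn n x : homog n (@gvecn n x).
Proof. by move=> m hm; rewrite gvecn_neq. Qed.

Lemma fsupp_gvecn n x : fsupp (@gvecn n x).
Proof. by exists n.+1 => m hm; rewrite gvecn_neq // neq_ltn hm orbT. Qed.

Lemma homog_fsupp n (x : gvec A) : homog n x -> fsupp x.
Proof. by move=> h; exists n.+1 => m hm; rewrite h // neq_ltn hm orbT. Qed.

Lemma homog_gvecnE n (x : gvec A) : homog n x -> x = gvecn (x n).
Proof.
move=> h; apply: functional_extensionality_dep => m.
case: (eqVneq m n) => [->|hm]; first by rewrite gvecn_eq.
by rewrite gvecn_neq // h.
Qed.

End Basics.

Section B.
Variable k : fieldType.
Variable A : gdata k.
Hypothesis Hgd : forall n i j c a b, (i + j)%N != n -> gdc A n i j c a b = 0.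

Lemma gcomul_gvecn n (x : 'rV[k]_(gdim A n)) i j :
  gcomul (gvecn x) i j = \matrix_(a, b) \sum_c x 0 c * gdc A n i j c a b.
Proof.
apply/matrixP => a b; rewrite !mxE.
rewrite (sum_single (F := fun m : nat => \sum_(c < gdim A m) (gvecn x m) 0 c * gdc A m i j c a b) _ (n := n)).
  case: ifP => hn; first by rewrite gvecn_eq.
  rewrite big1 // => c _; rewrite Hgd ?mulr0 //.
  by apply: contraFN hn => /eqP <-.
by move=> m hm; rewrite gvecn_neq // big1 // => c _; rewrite mxE mul0r.
Qed.

End B.

Section C.
Variable k : fieldType.

Lemma rank1_cols p q (G : 'M[k]_(p, q)) :
  \sum_(b < q) (\row_a G a b)^T *m delta_mx 0 b = G.
Proof.
apply/matrixP => a b'; rewrite summxE.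
under eq_bigr => b _ do rewrite !mxE big_ord1 !mxE /=.
by rewrite sum_delta_l.
Qed.

Lemma rank1_rows p q (G : 'M[k]_(p, q)) :
  \sum_(a < p) (delta_mx 0 a)^T *m row a G = G.
Proof.
apply/matrixP => a' b; rewrite summxE.
under eq_bigr => a _ do rewrite !mxE big_ord1 !mxE /=.
rewrite -[RHS](sum_delta_l (fun a => G a b) a'); apply: eq_bigr => a _.
by rewrite mulrC.
Qed.

Variable A : gdata k.

Definition tL n (G : 'M[k]_(gdim A n, gdim A 0)) : gten A := fun i j =>
  \sum_(b < gdim A 0) (gvecn (\row_a G a b) i)^T *m (ek b j).
Definition tR n (G : 'M[k]_(gdim A 0, gdim A n)) : gten A := fun i j =>
  \sum_(a < gdim A 0) (ek a i)^T *m (gvecn (row a G) j).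

Lemma tL_eq n G : @tL n G n 0 = G.
Proof. by rewrite /tL /ek; under eq_bigr => b _ do rewrite !gvecn_eq; apply: rank1_cols. Qed.
Lemma tR_eq n G : @tR n G 0 n = G.
Proof. by rewrite /tR /ek; under eq_bigr => b _ do rewrite !gvecn_eq; apply: rank1_rows. Qed.
Lemma tL_neq n G i j : (i != n) || (j != 0%N) -> @tL n G i j = 0.
Proof.
case/orP => h; rewrite /tL big1 // => b _.
  by rewrite gvecn_neq // trmx0 mul0mx.
by rewrite /ek (gvecn_neq _ h) mulmx0.
Qed.
Lemma tR_neq n G i j : (i != 0%N) || (j != n) -> @tR n G i j = 0.
Proof.
case/orP => h; rewrite /tR big1 // => b _.
  by rewrite /ek gvecn_neq // trmx0 mul0mx.
by rewrite gvecn_neq // mulmx0.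
Qed.

Lemma tL_in n G (Q : gvec A -> Prop) : (forall b : 'I_(gdim A 0), Q (ek b)) ->
  inTens (@fsupp _ A) Q (@tL n G).
Proof.
move=> HQ; exists (gdim A 0), (fun b => gvecn (\row_a G a b)), (fun b => ek b).
by split=> // r; split; [apply: fsupp_gvecn|apply: HQ].
Qed.
Lemma tR_in n G (Q : gvec A -> Prop) : (forall b : 'I_(gdim A 0), Q (ek b)) ->
  inTens Q (@fsupp _ A) (@tR n G).
Proof.
move=> HQ; exists (gdim A 0), (fun b => ek b), (fun a => gvecn (row a G)).
by split=> // r; split; [apply: HQ|apply: fsupp_gvecn].
Qed.

Hypothesis Hgd : forall n i j c a b, (i + j)%N != n -> gdc A n i j c a b = 0.

Definition Inj := forall n (x : 'rV[k]_(gdim A n)), (2 <= n)%N ->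
  (forall i j a b, (1 <= i)%N -> (1 <= j)%N -> (i + j)%N = n ->
     \sum_c x 0 c * gdc A n i j c a b = 0) -> x = 0.

Lemma corad_grad_Inj :
  (forall x : gvec A, homog 0 x <-> coradical x) -> coradically_graded A -> Inj.
Proof.
move=> Hcor [_ Hc1] n x hn Hx.
pose G1 := \matrix_(a, b) \sum_c x 0 c * gdc A n n 0 c a b.
pose G2 := \matrix_(a, b) \sum_c x 0 c * gdc A n 0 n c a b.
have HQ : forall b : 'I_(gdim A 0), coradical (ek b) by move=> b; apply/Hcor/homog_gvecn.
have Hn0 : n != 0%N by case: n hn {x Hx G1 G2}.
have : corad1 (gvecn x).
  split; first exact: fsupp_gvecn.
  exists (tL G1), (tR G2); split; first exact: tL_in.
  split; first exact: tR_in.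
  move=> i j; rewrite gcomul_gvecn //.
  case: (eqVneq i n) => [->|hin].
    rewrite (@tR_neq n) ?Hn0 //; case: (eqVneq j 0%N) => [->|hj0].
      by rewrite tL_eq addr0.
    rewrite tL_neq ?hj0 ?orbT // addr0; apply/matrixP => a b; rewrite !mxE big1 // => c _.
    by rewrite Hgd ?mulr0 // -{2}(addn0 n) eqn_add2l.
  rewrite tL_neq ?hin // add0r.
  case: (eqVneq i 0%N) => [->|hi0].
    case: (eqVneq j n) => [->|hjn]; first by rewrite tR_eq.
    rewrite tR_neq ?hjn ?orbT //; apply/matrixP => a b; rewrite !mxE big1 // => c _.
    by rewrite Hgd ?mulr0.
  rewrite tR_neq ?hi0 //; apply/matrixP => a b; rewrite !mxE.
  case: (eqVneq (i + j)%N n) => [hij|hij]; last first.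
    by rewrite big1 // => c _; rewrite Hgd ?mulr0.
  apply: Hx => //; first by rewrite lt0n.
  rewrite lt0n; apply: contra hin => /eqP hj; by rewrite -hij hj addn0.
case/Hc1 => y [z [hy [hz hxyz]]].
have := hxyz n; rewrite gvecn_eq => ->.
rewrite hy ?hz ?addr0 //; by case: n hn {x Hx G1 G2 Hn0 hxyz} => [|[|]].
Qed.

End C.

Section D.
Variable k : fieldType.
Variable A : gdata k.
Hypothesis Hgd : forall n i j c a b, (i + j)%N != n -> gdc A n i j c a b = 0.

Lemma gcomul_entry (x : gvec A) i j a b :
  gcomul x i j a b = \sum_c x (i + j)%N 0 c * gdc A (i + j) i j c a b.
Proof.
rewrite mxE (sum_single (F := fun m : nat => \sum_(c < gdim A m) (x m) 0 c * gdc A m i j c a b) _ (n := (i + j)%N)) ?ltnSn //.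
by move=> m hm; rewrite big1 // => c _; rewrite Hgd ?mulr0 // eq_sym.
Qed.

Definition gvrow (x : gvec A) (b : 'I_(gdim A 0)) : gvec A := fun m =>
  \row_a (gcomul x m 0) a b.
Definition gvcol (x : gvec A) (a : 'I_(gdim A 0)) : gvec A := fun m =>
  \row_b (if m == 0%N then 0 else gcomul x 0 m a b).
Definition tLx (x : gvec A) : gten A := fun i j =>
  \sum_(b < gdim A 0) (gvrow x b i)^T *m (ek b j).
Definition tRx (x : gvec A) : gten A := fun i j =>
  \sum_(a < gdim A 0) (ek a i)^T *m (gvcol x a j).

Lemma tLx0 x i : tLx x i 0 = gcomul x i 0.
Proof. by rewrite /tLx /ek; under eq_bigr => b _ do rewrite !gvecn_eq; apply: rank1_cols. Qed.
Lemma tLxN x i j : j != 0%N -> tLx x i j = 0.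
Proof. by move=> h; rewrite /tLx big1 // => b _; rewrite /ek (gvecn_neq _ h) mulmx0. Qed.
Lemma tRx0 x j : j != 0%N -> tRx x 0 j = gcomul x 0 j.
Proof.
move=> h; rewrite /tRx /ek; under eq_bigr => b _ do rewrite !gvecn_eq.
rewrite -[RHS]rank1_rows; apply: eq_bigr => a _; congr (_ *m _).
by apply/rowP => b; rewrite !mxE (negbTE h).
Qed.
Lemma tRx00 x : tRx x 0 0 = 0.
Proof.
rewrite /tRx big1 // => a _; suff -> : gvcol x a 0 = 0 by rewrite mulmx0.
by apply/rowP => b; rewrite !mxE.
Qed.
Lemma tRxN x i j : i != 0%N -> tRx x i j = 0.
Proof. by move=> h; rewrite /tRx big1 // => b _; rewrite /ek (gvecn_neq _ h) trmx0 mul0mx. Qed.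

Lemma Inj_corad_grad :
  (forall x : gvec A, homog 0 x <-> coradical x) -> Inj A -> coradically_graded A.
Proof.
move=> Hcor Hinj; split => // x; split.
  case=> fx [t1 [t2 [[m1 [u1 [v1 [h1 e1]]]] [[m2 [u2 [v2 [h2 e2]]]] e]]]].
  have Z : forall i j, (1 <= i)%N -> (1 <= j)%N -> gcomul x i j = 0.
    move=> i j hi hj; rewrite e e1 e2 !big1 ?addr0 // => r _.
      by have [/Hcor hu _] := h2 r; rewrite (hu i) ?trmx0 ?mul0mx // -lt0n.
    by have [_ /Hcor hv] := h1 r; rewrite (hv j) ?mulmx0 // -lt0n.
  have Xn : forall n, (2 <= n)%N -> x n = 0.
    move=> n hn; apply: Hinj => // i j a b hi hj hij; subst n.
    by rewrite -gcomul_entry // Z // mxE.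
  exists (gvecn (x 0%N)), (gvecn (x 1%N)); split; first exact: homog_gvecn.
  split; first exact: homog_gvecn.
  case=> [|[|n]]; first by rewrite gvecn_eq gvecn_neq // addr0.
    by rewrite gvecn_eq gvecn_neq // add0r.
  by rewrite Xn // !gvecn_neq // addr0.
case=> y [z [hy [hz hx]]].
have Xn : forall n, (2 <= n)%N -> x n = 0.
  by move=> [|[|n]] // _; rewrite hx hy // hz // addr0.
have Z : forall i j, (2 <= i + j)%N -> gcomul x i j = 0.
  by move=> i j h; apply/matrixP => a b; rewrite [RHS]mxE gcomul_entry // Xn // big1 // => c _; rewrite mxE mul0r.
split; first by exists 2%N.
exists (tLx x), (tRx x); split.
  exists (gdim A 0), (gvrow x), (fun b => ek b); split => // r; split.
    exists 2%N => m hm; apply/rowP => a; rewrite /gvrow [RHS]mxE mxE.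
    by rewrite Z ?mxE // addn0.
  by apply/Hcor/homog_gvecn.
split.
  exists (gdim A 0), (fun b => ek b), (gvcol x); split => // r; split.
    by apply/Hcor/homog_gvecn.
  exists 2%N => m hm; apply/rowP => a; rewrite /gvcol [RHS]mxE mxE.
  by case: ifP => // _; rewrite Z ?mxE.
move=> i j; case: (eqVneq j 0%N) => [->|hj].
  case: (eqVneq i 0%N) => [->|hi]; first by rewrite tLx0 tRx00 addr0.
  by rewrite tLx0 tRxN // addr0.
rewrite tLxN // add0r; case: (eqVneq i 0%N) => [->|hi]; first by rewrite tRx0.
rewrite tRxN // Z //.
by rewrite -(addn1 1) leq_add // lt0n.
Qed.

End D.

Section MxPred.
Variable k : fieldType.

Lemma closed_sub d (Q : 'rV[k]_d -> Prop) m (M : 'M_(m, d)) :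
  Q 0 -> (forall c u v, Q u -> Q v -> Q (c *: u + v)) ->
  (forall i, Q (row i M)) -> forall v, (v <= M)%MS -> Q v.
Proof.
move=> Q0 QL QM v /submxP [w ->]; rewrite mulmx_sum_row.
elim/big_ind: _ => //.
  by move=> x y Qx Qy; rewrite -[x]scale1r; apply: QL.
by move=> i _; rewrite -[_ *: _]addr0; apply: QL.
Qed.

Lemma mx_of_pred d (Q : 'rV[k]_d -> Prop) :
  Q 0 -> (forall c u v, Q u -> Q v -> Q (c *: u + v)) ->
  exists M : 'M[k]_d, forall v, Q v <-> (v <= M)%MS.
Proof.
move=> Q0 QL.
suff H : forall m (M : 'M[k]_d), (forall u, (u <= M)%MS -> Q u) -> (d - \rank M <= m)%N ->
  exists M : 'M[k]_d, forall v, Q v <-> (v <= M)%MS.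
  apply: (H d 0) => [u|]; last by rewrite leq_subr.
  by move/submx0null ->.
elim=> [|m IH] M HM hr.
  exists M => v; split => [_|]; last exact: HM.
  apply: submx_full; rewrite /row_full eqn_leq rank_leq_col /=.
  by rewrite -subn_eq0 -leqn0.
case: (classic (forall v, Q v -> (v <= M)%MS)) => [H|].
  by exists M => v; split => [/H|/HM].
move/not_all_ex_not => [v nQ].
have Qv := @not_imply_elim _ _ nQ.
have nvM : ~~ (v <= M)%MS by apply/negP; exact: (@not_imply_elim2 _ _ nQ).
apply: (IH (M + v)%MS).
  move=> u /sub_addsmxP [[w1 w2] /= ->].
  have : (w2 *m v <= v)%MS by apply: submxMl.
  case/sub_rVP => c ->; rewrite addrC; apply: QL => //; apply: HM; exact: submxMl.
have lt : (M < M + v)%MS.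
  rewrite ltmxE addsmxSl /=; apply: contra nvM => h.
  by apply: submx_trans h; apply: addsmxSr.
have := rank_ltmx lt; have := rank_leq_col (M + v)%MS; lia.
Qed.

End MxPred.

Section Dual.
Variable k : fieldType.
Variable A : gdata k.

Definition prow n i (a : 'I_(gdim A i)) (b : 'I_(gdim A (n - i))) : 'rV[k]_(gdim A n) :=
  \row_c gmc A i (n - i) n a b c.
Definition Smx n : 'M[k]_(gdim A n) :=
  (\sum_(i < n | (0 < i)%N) \sum_(a < gdim A i) \sum_(b < gdim A (n - i)) <<prow a b>>)%MS.
Definition Surj := forall n, (2 <= n)%N -> forall y : 'rV[k]_(gdim A n), (y <= Smx n)%MS.

Lemma prow_sub n (i : 'I_n) a b : (0 < i)%N -> (@prow n i a b <= Smx n)%MS.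
Proof.
move=> hi; apply: (sumsmx_sup i) => //; apply: (sumsmx_sup a) => //.
by apply: (sumsmx_sup b) => //; rewrite genmxE.
Qed.

Lemma Smx_subP n m (B : 'M[k]_(m, gdim A n)) :
  (forall i (a : 'I_(gdim A i)) b, (0 < i)%N -> (i < n)%N -> (@prow n i a b <= B)%MS) ->
  (Smx n <= B)%MS.
Proof.
move=> H; apply/sumsmx_subP => i hi; apply/sumsmx_subP => a _; apply/sumsmx_subP => b _.
by rewrite genmxE; apply: H.
Qed.
End Dual.

Section Duality.
Variable k : fieldType.
Variable A : gdata k.

Lemma Surj_dual_Inj : Surj (gdual A) -> Inj A.
Proof.
move=> HS n x hn Hx.
have K : (Smx (gdual A) n <= kermx x^T)%MS.
  apply: Smx_subP => i a b hi hin; apply/sub_kermxP; apply/matrixP => u v.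
  rewrite !mxE -[RHS](Hx i (n - i)%N a b) //; last 2 first.
  - by rewrite subn_gt0.
  - by rewrite subnKC // ltnW.
  by apply: eq_bigr => c _; rewrite !mxE (ord1 v) mulrC.
have H1 : ((1%:M : 'M[k]_(gdim A n)) <= kermx x^T)%MS.
  apply: submx_trans K; apply/row_subP => i; exact: HS.
move/sub_kermxP: H1; rewrite mul1mx => h.
by rewrite -[x]trmxK h trmx0.
Qed.

Lemma Inj_Surj_dual : Inj A -> Surj (gdual A).
Proof.
move=> HI n hn y; apply: submx_full.
set S := Smx (gdual A) n.
have K0 : kermx S^T = 0.
  apply/row_matrixP => r; rewrite row0; apply: HI => // i j a b hi hj hij.
  have ej : j = (n - i)%N by lia.
  subst j.
  have hin : (i < n)%N by lia.
  have hp := @prow_sub _ (gdual A) n (Ordinal hin) a b hi.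
  have hr : row r (kermx S^T) *m S^T = 0 by apply/sub_kermxP; apply: row_sub.
  case/submxP: hp => w hw.
  have : (@prow _ (gdual A) n i a b) *m (row r (kermx S^T))^T = 0.
    rewrite hw -mulmxA.
    have -> : S *m (row r (kermx S^T))^T = (row r (kermx S^T) *m S^T)^T.
      by rewrite trmx_mul trmxK.
    by rewrite hr trmx0 mulmx0.
  move/matrixP/(_ 0 0); rewrite !mxE => h.
  by rewrite -[RHS]h; apply: eq_bigr => c _; rewrite !mxE mulrC.
have := mxrank_ker S^T; rewrite K0 mxrank0 mxrank_tr => h.
rewrite /row_full eqn_leq rank_leq_col /=.
have := rank_leq_col S; rewrite /= in h *; lia.
Qed.
End Duality.

Section Gen.
Variable k : fieldType.
Variable A : gdata k.
Hypothesis Hgm : forall i j n a b c, (i + j)%N != n -> gmc A i j n a b c = 0.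

Lemma ek_entry i (a : 'I_(gdim A i)) i' (a' : 'I_(gdim A i')) :
  (ek a i') 0 a' = ((i' == i) && (a' == a :> nat))%:R.
Proof.
rewrite mxE.
under eq_bigr => c _ do rewrite mxE /= mulrC.
rewrite (bigD1 a) //= eqxx mulr1 big1 ?addr0 // => c hc.
by rewrite (negbTE hc) mulr0.
Qed.

Lemma gmul_ek i j (a : 'I_(gdim A i)) (b : 'I_(gdim A j)) m :
  gmul (ek a) (ek b) m = \row_c gmc A i j m a b c.
Proof.
apply/rowP => c; rewrite !mxE.
rewrite (sum_single (F := fun i' : nat => \sum_(j' < m.+1) \sum_(a0 < gdim A i')
   \sum_(b0 < gdim A j') (ek a i') 0 a0 * (ek b j') 0 b0 * gmc A i' j' m a0 b0 c) _ (n := i)); last first.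
  move=> i' hi'; apply: big1 => j' _; apply: big1 => a0 _; apply: big1 => b0 _.
  by rewrite ek_entry (negbTE hi') /= !mul0r.
case: ifP => hi; last first.
  by rewrite Hgm //; apply: contraFN hi => /eqP <-; rewrite ltnS leq_addr.
rewrite (sum_single (F := fun j' : nat => \sum_(a0 < gdim A i)
   \sum_(b0 < gdim A j') (ek a i) 0 a0 * (ek b j') 0 b0 * gmc A i j' m a0 b0 c) _ (n := j)); last first.
  move=> j' hj'; apply: big1 => a0 _; apply: big1 => b0 _.
  by rewrite (ek_entry b) (negbTE hj') /= !mulr0 mul0r.
case: ifP => hj; last first.
  by rewrite Hgm //; apply: contraFN hj => /eqP <-; rewrite ltnS leq_addl.
rewrite (bigD1 a) //= [X in _ + X]big1 ?addr0; last first.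
  move=> a0 ha0; apply: big1 => b0 _; rewrite ek_entry eqxx /=.
  by rewrite (inj_eq val_inj) (negbTE ha0) !mul0r.
rewrite (bigD1 b) //= [X in _ + X]big1 ?addr0; last first.
  move=> b0 hb0; rewrite (ek_entry b) eqxx /=.
  by rewrite (inj_eq val_inj) (negbTE hb0) !mulr0 mul0r.
by rewrite !ek_entry !eqxx /= !mul1r.
Qed.

Lemma gmul_ek_gvecn i j (a : 'I_(gdim A i)) (b : 'I_(gdim A j)) s (e : (i + j)%N = s) :
  gmul (ek a) (ek b) = gvecn (n := s) (\row_c gmc A i j s a b c).
Proof.
apply: functional_extensionality_dep => m; rewrite gmul_ek.
case: (eqVneq m s) => [->|hm]; first by rewrite gvecn_eq.
rewrite gvecn_neq //; apply/rowP => c; rewrite !mxE Hgm // e eq_sym; exact: hm.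
Qed.

Lemma gvecn0 n : gvecn (n := n) 0 = gzero A.
Proof.
apply: functional_extensionality_dep => m; apply/rowP => c; rewrite !mxE.
by rewrite big1 // => c' _; rewrite mxE mul0r.
Qed.

Lemma gvecnL n c (u v : 'rV[k]_(gdim A n)) :
  gvecn (c *: u + v) = (fun m => c *: gvecn u m + gvecn v m).
Proof.
apply: functional_extensionality_dep => m; apply/rowP => c'; rewrite !mxE.
rewrite mulr_sumr -big_split /=; apply: eq_bigr => b _; rewrite !mxE; ring.
Qed.

Lemma sub_sum (P : gvec A -> Prop) : subspace P ->
  forall (F : nat -> gvec A), (forall m, P (F m)) -> forall N, P (fun n => \sum_(m < N) F m n).
Proof.
move=> [_ [P0 PL]] F HF; elim=> [|N IH].
  have -> : (fun n => \sum_(m < 0) F m n) = gzero A.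
    by apply: functional_extensionality_dep => n; rewrite big_ord0.
  exact: P0.
have -> : (fun n => \sum_(m < N.+1) F m n) = (fun n => 1 *: (\sum_(m < N) F m n) + F N n).
  by apply: functional_extensionality_dep => n; rewrite big_ord_recr /= scale1r.
exact: PL.
Qed.

Lemma sum_singleV (V : zmodType) (F : nat -> V) N n :
  (forall m, m != n -> F m = 0) ->
  \sum_(m < N) F m = if (n < N)%N then F n else 0.
Proof.
move=> HF; case: ifP => hn.
  rewrite (bigD1 (Ordinal hn)) //= big1 ?addr0 // => m hm; apply: HF.
  by apply: contra hm => /eqP e; apply/eqP/val_inj.
by rewrite big1 // => m _; apply: HF; apply: contraFN hn => /eqP <-.
Qed.

Lemma fsupp_sum (x : gvec A) : fsupp x -> exists N, x = (fun n => \sum_(m < N) gvecn (x m) n).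
Proof.
case=> N hN; exists N; apply: functional_extensionality_dep => n.
rewrite (sum_singleV (F := fun m : nat => gvecn (x m) n) _ (n := n)).
  by case: ifP => h; rewrite ?gvecn_eq // hN // leqNgt h.
by move=> m hm; rewrite gvecn_neq // eq_sym.
Qed.

Lemma Surj_gen01 : Surj A -> gen01 A.
Proof.
move=> HS P PS Pmul P0h P1h.
have [Pf [P0 PL]] := PS.
have Pn : forall n (y : 'rV[k]_(gdim A n)), P (gvecn y).
  elim/ltn_ind => n IH y.
  case: n IH y => [|[|n]] IH y; first exact/P0h/homog_gvecn.
    exact/P1h/homog_gvecn.
  have [M HM] : exists M : 'M[k]_(gdim A n.+2), forall v, P (gvecn v) <-> (v <= M)%MS.
    apply: mx_of_pred; first by rewrite gvecn0.
    by move=> c u v Pu Pv; rewrite gvecnL; apply: PL.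
  apply/HM; apply: submx_trans (HS n.+2 isT y) _.
  apply: Smx_subP => i a b hi hin; apply/HM => /=.
  rewrite -(@gmul_ek_gvecn i (n.+2 - i) a b n.+2); last by lia.
  by apply: Pmul; apply: IH; lia.
move=> x /fsupp_sum [N ->]; exact: (@sub_sum P PS (fun m => gvecn (x m)) (fun m => Pn _ _) N).
Qed.

End Gen.

Section Gen2.
Variable k : fieldType.
Variable A : gdata k.
Hypothesis Hgm : forall i j n a b c, (i + j)%N != n -> gmc A i j n a b c = 0.
Hypothesis HA : forall i j l n a b g c,
     \sum_(e < gdim A (i + j)) gmc A i j (i + j) a b e * gmc A (i + j) l n e g c
   = \sum_(f < gdim A (j + l)) gmc A j l (j + l) b g f * gmc A i (j + l) n a f c.

Lemma assoc' i j l s p n (hs : (i + j)%N = s) (hp : (j + l)%N = p) a b g c :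
     \sum_(e < gdim A s) gmc A i j s a b e * gmc A s l n e g c
   = \sum_(f < gdim A p) gmc A j l p b g f * gmc A i p n a f c.
Proof. subst s p; exact: HA. Qed.

Definition Mul i j n (u : 'rV[k]_(gdim A i)) (v : 'rV[k]_(gdim A j)) : 'rV[k]_(gdim A n) :=
  \row_c \sum_a \sum_b u 0 a * v 0 b * gmc A i j n a b c.

Lemma gmul_Mul (x y : gvec A) n :
  gmul x y n = \sum_(i < n.+1) \sum_(j < n.+1) Mul n (x i) (y j).
Proof.
apply/rowP => c; rewrite !mxE summxE; apply: eq_bigr => i _.
by rewrite summxE; apply: eq_bigr => j _; rewrite mxE.
Qed.

Lemma Mul0l i j n v : Mul (i := i) (j := j) n 0 v = 0.
Proof.
apply/rowP => c; rewrite !mxE big1 // => a _; rewrite big1 // => b _.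
by rewrite mxE !mul0r.
Qed.
Lemma Mul0r i j n u : Mul (i := i) (j := j) n u 0 = 0.
Proof.
apply/rowP => c; rewrite !mxE big1 // => a _; rewrite big1 // => b _.
by rewrite mxE mulr0 mul0r.
Qed.
Lemma MulLr i j n u c v w : Mul (i := i) (j := j) n u (c *: v + w) = c *: Mul n u v + Mul n u w.
Proof.
apply/rowP => c'; rewrite !mxE mulr_sumr -big_split /=; apply: eq_bigr => a _.
rewrite mulr_sumr -big_split /=; apply: eq_bigr => b _; rewrite !mxE; ring.
Qed.
Lemma MulLl i j n c u w v : Mul (i := i) (j := j) n (c *: u + w) v = c *: Mul n u v + Mul n w v.
Proof.
apply/rowP => c'; rewrite !mxE mulr_sumr -big_split /=; apply: eq_bigr => a _.
rewrite mulr_sumr -big_split /=; apply: eq_bigr => b _; rewrite !mxE; ring.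
Qed.

Lemma Mul_grade i j n u v : (i + j)%N != n -> Mul (i := i) (j := j) n u v = 0.
Proof.
move=> h; apply/rowP => c; rewrite !mxE big1 // => a _; rewrite big1 // => b _.
by rewrite Hgm // mulr0.
Qed.

Lemma MulM n i (hi : (0 < i)%N) (hin : (i < n)%N) u v :
  (Mul (i := i) (j := n - i) n u v <= Smx A n)%MS.
Proof.
have -> : Mul n u v = \sum_a \sum_b (u 0 a * v 0 b) *: prow (n := n) (i := i) a b.
  apply/rowP => c; rewrite !mxE summxE; apply: eq_bigr => a _.
  by rewrite summxE; apply: eq_bigr => b _; rewrite !mxE.
apply: summx_sub => a _; apply: summx_sub => b _; apply: scalemx_sub.
exact: (@prow_sub _ A n (Ordinal hin) a b hi).
Qed.

Lemma Smx_closed n (Q : 'rV[k]_(gdim A n) -> 'rV[k]_(gdim A n)) :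
  Q 0 = 0 -> (forall c v w, Q (c *: v + w) = c *: Q v + Q w) ->
  (forall i (a : 'I_(gdim A i)) b, (0 < i)%N -> (i < n)%N -> (Q (prow a b) <= Smx A n)%MS) ->
  forall v, (v <= Smx A n)%MS -> (Q v <= Smx A n)%MS.
Proof.
move=> Q0 QL HQ.
have [M HM] : exists M : 'M[k]_(gdim A n), forall v, (Q v <= Smx A n)%MS <-> (v <= M)%MS.
  apply: mx_of_pred; first by rewrite Q0 sub0mx.
  by move=> c u w h1 h2; rewrite QL addmx_sub // scalemx_sub.
move=> v hv; apply/HM; apply: submx_trans hv _.
by apply: Smx_subP => i a b hi hin; apply/HM; apply: HQ.
Qed.

Lemma MulL n u v : (v <= Smx A n)%MS -> (Mul (i := 0) (j := n) n u v <= Smx A n)%MS.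
Proof.
apply: Smx_closed; [exact: Mul0r | exact: MulLr |] => i a' b' hi hin.
have -> : Mul n u (prow a' b') =
   \sum_a \sum_e (u 0 a * gmc A 0 i i a a' e) *: prow (n := n) (i := i) e b'.
  apply/rowP => c; rewrite !mxE summxE; apply: eq_bigr => a _.
  rewrite summxE.
  under eq_bigr => e _ do rewrite !mxE -mulrA.
  rewrite -mulr_sumr -(@assoc' 0 i (n - i) i n n) //; last by lia.
  rewrite mulr_sumr; apply: eq_bigr => b _; rewrite !mxE; ring.
apply: summx_sub => a _; apply: summx_sub => e _; apply: scalemx_sub.
exact: (@prow_sub _ A n (Ordinal hin) e b' hi).
Qed.

Lemma MulR n u v : (u <= Smx A n)%MS -> (Mul (i := n) (j := 0) n u v <= Smx A n)%MS.
Proof.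
apply: (@Smx_closed n (fun u => Mul n u v)); [exact: Mul0l | move=> ? ? ?; apply: MulLl |] => i a' b' hi hin.
have -> : Mul n (prow a' b') v =
   \sum_b \sum_f (v 0 b * gmc A (n - i) 0 (n - i) b' b f) *: prow (n := n) (i := i) a' f.
  apply/rowP => c; rewrite !mxE summxE exchange_big /=; apply: eq_bigr => b _.
  rewrite summxE.
  under eq_bigr => e _ do rewrite !mxE -mulrA mulrCA.
  rewrite -mulr_sumr (@assoc' i (n - i) 0 n (n - i) n); last 2 first.
  - by lia.
  - by rewrite addn0.
  rewrite mulr_sumr; apply: eq_bigr => a _; rewrite !mxE; ring.
apply: summx_sub => b _; apply: summx_sub => f _; apply: scalemx_sub.
exact: (@prow_sub _ A n (Ordinal hin) a' f hi).
Qed.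

End Gen2.

Section Gen3.
Variable k : fieldType.
Variable A : gdata k.
Hypothesis Hgm : forall i j n a b c, (i + j)%N != n -> gmc A i j n a b c = 0.
Hypothesis HA : forall i j l n a b g c,
     \sum_(e < gdim A (i + j)) gmc A i j (i + j) a b e * gmc A (i + j) l n e g c
   = \sum_(f < gdim A (j + l)) gmc A j l (j + l) b g f * gmc A i (j + l) n a f c.

Lemma Mul_sub n (x y : gvec A) :
  (forall m, (2 <= m)%N -> (x m <= Smx A m)%MS) ->
  (forall m, (2 <= m)%N -> (y m <= Smx A m)%MS) ->
  (2 <= n)%N -> forall i j, (Mul n (x i) (y j) <= Smx A n)%MS.
Proof.
move=> Hx Hy hn i j.
case: (eqVneq (i + j)%N n) => hij; last by rewrite (Mul_grade Hgm) // sub0mx.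
case: i hij => [|i] hij.
  rewrite add0n in hij; subst j; exact: (MulL HA _ (Hy n hn)).
case: j hij => [|j] hij.
  rewrite addn0 in hij; subst n; exact: (MulR HA _ (Hx _ hn)).
have ej : j.+1 = (n - i.+1)%N by lia.
rewrite ej; apply: MulM => //; lia.
Qed.

Lemma gen01_Surj : gen01 A -> Surj A.
Proof.
move=> HG.
pose P (x : gvec A) := fsupp x /\ forall m, (2 <= m)%N -> (x m <= Smx A m)%MS.
have PS : subspace P.
  split; first by move=> x [].
  split; first by split; [exists 0%N | move=> m _; rewrite sub0mx].
  move=> c x y [[Nx hx] Px] [[Ny hy] Py]; split.
    exists (Nx + Ny)%N => m hm; rewrite hx ?hy ?scaler0 ?addr0 //; lia.
  by move=> m hm; rewrite addmx_sub ?scalemx_sub ?Px ?Py.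
have Pmul : forall x y, P x -> P y -> P (gmul x y).
  move=> x y [[Nx hx] Px] [[Ny hy] Py]; split.
    exists (Nx + Ny)%N => m hm; rewrite gmul_Mul big1 // => i _; rewrite big1 // => j _.
    case: (eqVneq (i + j)%N m) => hij; last exact: (Mul_grade Hgm).
    case: (leqP Nx i) => hi; first by rewrite hx // Mul0l.
    by rewrite hy ?Mul0r //; lia.
  move=> m hm; rewrite gmul_Mul; apply: summx_sub => i _; apply: summx_sub => j _.
  exact: Mul_sub.
have H0 : forall x, homog 0 x -> P x.
  move=> x hx; split; first exact: homog_fsupp hx.
  by move=> m hm; rewrite hx ?sub0mx //; case: m hm.
have H1 : forall x, homog 1 x -> P x.
  move=> x hx; split; first exact: homog_fsupp hx.
  by move=> m hm; rewrite hx ?sub0mx //; case: m hm => [|[]].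
move=> n hn y.
have [_ /(_ n hn)] := HG P PS Pmul H0 H1 _ (fsupp_gvecn y).
by rewrite gvecn_eq.
Qed.

End Gen3.

Section Corad.
Variable k : fieldType.
Variable A : gdata k.

Lemma sub_scale (D : gvec A -> Prop) : subspace D -> forall c x, D x -> D (fun n => c *: x n).
Proof.
move=> [_ [D0 DL]] c x Dx.
have := DL c x (gzero A) Dx D0; congr D; apply: functional_extensionality_dep => n.
by rewrite /gzero addr0.
Qed.

Lemma lincomb (D : gvec A -> Prop) : subspace D ->
  forall m (c : 'I_m -> k) (w : 'I_m -> gvec A), (forall r, D (w r)) ->
  D (fun n => \sum_(r < m) c r *: w r n).
Proof.
move=> DS; have [_ [D0 DL]] := DS; elim=> [|m IH] c w Dw.
  have -> : (fun n => \sum_(r < 0) c r *: w r n) = gzero A.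
    by apply: functional_extensionality_dep => n; rewrite big_ord0.
  exact: D0.
have -> : (fun n => \sum_(r < m.+1) c r *: w r n) =
  (fun n => 1 *: (\sum_(r < m) c (widen_ord (leqnSn m) r) *: w (widen_ord (leqnSn m) r) n)
     + (fun n => c ord_max *: w ord_max n) n).
  by apply: functional_extensionality_dep => n; rewrite big_ord_recr /= scale1r.
apply: DL; first by apply: IH => r; apply: Dw.
by apply: sub_scale.
Qed.

Hypothesis Hgd : forall n i j c a b, (i + j)%N != n -> gdc A n i j c a b = 0.
Hypothesis Hcu : forall n c b, \sum_(u < gdim A 0) gdc A n n 0 c b u * gcu A u = (c == b)%:R.

Lemma sum_colrow p q r (X : 'M[k]_(p, q)) (Y : 'M[k]_(q, r)) :
  \sum_(b < q) col b X *m row b Y = X *m Y.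
Proof.
apply/matrixP => a c; rewrite summxE !mxE; apply: eq_bigr => b _.
by rewrite !mxE big_ord1 !mxE.
Qed.

Lemma top_degree (x : gvec A) : fsupp x -> (exists n, x n != 0) ->
  exists N, x N != 0 /\ forall m, (N < m)%N -> x m = 0.
Proof.
case=> B; elim: B => [|B IH] hB [n hn].
  by move: hn; rewrite hB // eqxx.
case: (eqVneq (x B) 0) => hxB.
  apply: IH; last by exists n.
  move=> m; rewrite leq_eqVlt => /orP [/eqP <- //|]; exact: hB.
by exists B; split => // m hm; apply: hB.
Qed.

Lemma row_neq0 m (v : 'rV[k]_m) : v != 0 -> exists a, v 0 a != 0.
Proof.
move=> hv; apply: NNPP => H; move/negP: hv; apply; apply/eqP/rowP => a.
rewrite mxE; apply/eqP; apply: NNPP => h; apply: H; by exists a; apply/negP.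
Qed.

Lemma simple_homog0 (D : gvec A -> Prop) : simple_subcoalg D -> forall x, D x -> homog 0 x.
Proof.
case=> [[DS Dco] [[x0 [Dx0 [n0 hn0]]] Dmin]].
pose E x := D x /\ homog 0 x.
have ES : subspace E.
  have [Df [D0 DL]] := DS.
  split; first by move=> x [/Df].
  split; first by split.
  move=> c x y [Dx hx] [Dy hy]; split; first exact: DL.
  by move=> m hm; rewrite hx ?hy ?scaler0 ?addr0.
have extract : forall x, D x -> forall i j, (forall m, (j < m)%N -> gcomul x i m = 0) ->
    forall a, exists y, D y /\ (forall m, (j < m)%N -> y m = 0) /\
       forall m, y m = row a (gcomul x i m).
  move=> x Dx i j hz a; have [m [u [v [huv e]]]] := Dco x Dx.
  exists (fun n => \sum_(r < m) (u r i 0 a) *: v r n); split.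
    by apply: (lincomb DS) => r; case: (huv r).
  have ex : forall n, \sum_(r < m) u r i 0 a *: v r n = row a (gcomul x i n).
    move=> n; rewrite e; apply/rowP => b; rewrite !mxE summxE.
    rewrite [RHS]summxE; by apply: eq_bigr => r _; rewrite !mxE big_ord1 !mxE.
  split; last exact: ex.
  by move=> n hn; rewrite ex hz // row0.
have extractT : forall x, D x -> forall i j, (forall m, (i < m)%N -> gcomul x m j = 0) ->
    forall b, exists y, D y /\ (forall m, (i < m)%N -> y m = 0) /\
       forall m, y m = (col b (gcomul x m j))^T.
  move=> x Dx i j hz b; have [m [u [v [huv e]]]] := Dco x Dx.
  exists (fun n => \sum_(r < m) (v r j 0 b) *: u r n); split.
    by apply: (lincomb DS) => r; case: (huv r).
  have ex : forall n, \sum_(r < m) v r j 0 b *: u r n = (col b (gcomul x n j))^T.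
    move=> n; rewrite e; apply/rowP => a; rewrite !mxE summxE.
    rewrite [RHS]summxE; by apply: eq_bigr => r _; rewrite !mxE big_ord1 !mxE mulrC.
  split; last exact: ex.
  by move=> n hn; rewrite ex hz // col0 trmx0.
have Ex0 : forall x, homog 0 x -> forall i j, (0 < i + j)%N -> (gcomul x i j = 0 :> 'M[k]_(gdim A i, gdim A j)).
  move=> x hx i j hij; apply/matrixP => a b; rewrite gcomul_entry // hx; last by rewrite -lt0n.
  by rewrite mxE big1 // => c _; rewrite mxE mul0r.
have EC : subcoalg E.
  split => // x [Dx hx].
  pose T := gcomul x 0 0.
  have Y : forall a : 'I_(gdim A 0), exists y, E y /\ y 0%N = row a T.
    move=> a; have [|y [Dy [hy ey]]] := extract x Dx 0%N 0%N _ a.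
      by move=> m hm; apply: Ex0.
    by exists y; split; [split => // m; rewrite -lt0n; apply: hy | apply: ey].
  have Z : forall b : 'I_(gdim A 0), exists z, E z /\ z 0%N = (col b T)^T.
    move=> b; have [|z [Dz [hz ez]]] := extractT x Dx 0%N 0%N _ b.
      by move=> m hm; apply: Ex0; rewrite ?addn0.
    by exists z; split; [split => // m; rewrite -lt0n; apply: hz | apply: ez].
  have [yf Hy] : exists yf : 'I_(gdim A 0) -> gvec A, forall a, E (yf a) /\ yf a 0%N = row a T.
    by apply: (choice (fun a y => E y /\ y 0%N = row a T)).
  have [zf Hz] : exists zf : 'I_(gdim A 0) -> gvec A, forall b, E (zf b) /\ zf b 0%N = (col b T)^T.
    by apply: (choice (fun b z => E z /\ z 0%N = (col b T)^T)).
  pose P := pinvmx T.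
  pose w b := (fun n => \sum_(a < gdim A 0) P b a *: yf a n).
  exists (gdim A 0), zf, w; split.
    move=> b; split; first by case: (Hz b).
    by apply: (lincomb ES) => a; case: (Hy a).
  move=> i j.
  have wz : forall b n, (0 < n)%N -> w b n = 0.
    move=> b n hn; rewrite /w big1 // => a _.
    by have [[_ H] _] := Hy a; rewrite (H n) ?scaler0 // -lt0n.
  case: (posnP i) => [->|hi].
    case: (posnP j) => [->|hj].
      have -> : \sum_(b < gdim A 0) (zf b 0%N)^T *m w b 0%N = T *m (P *m T).
        rewrite -sum_colrow; apply: eq_bigr => b _.
        have [_ ->] := Hz b; rewrite trmxK; congr (_ *m _).
        apply/rowP => c; rewrite /w !mxE summxE; apply: eq_bigr => a _.
        by have [_ ->] := Hy a; rewrite !mxE.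
      by rewrite mulmxA mulmxKpV.
    by rewrite (Ex0 x hx) ?add0n // big1 // => b _; rewrite wz // mulmx0.
  rewrite (Ex0 x hx) ?addn_gt0 ?hi // big1 // => b _.
  by have [[_ H] _] := Hz b; rewrite (H i) ?trmx0 ?mul0mx // -lt0n.
have [N [hN hNm]] := top_degree (proj1 DS x0 Dx0) (ex_intro _ n0 hn0).
have [a ha] := row_neq0 hN.
have [|y [Dy [hy ey]]] := extract x0 Dx0 N 0%N _ a.
  move=> m hm; apply/matrixP => a' b; rewrite gcomul_entry // hNm; last by lia.
  by rewrite mxE big1 // => c _; rewrite mxE mul0r.
have Ey : E y by split => // m; rewrite -lt0n; apply: hy.
have y0 : y 0%N != 0.
  apply/eqP => h0; move/eqP: ha; apply.
  have : \sum_b y 0%N 0 b * gcu A b = 0 by rewrite h0 big1 // => b _; rewrite mxE mul0r.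
  rewrite ey => <-.
  under eq_bigr => b _ do rewrite mxE (gcomul_entry Hgd) addn0 mulr_suml.
  rewrite exchange_big /=.
  rewrite -[LHS](sum_delta_r (fun c => x0 N 0 c) a); apply: eq_bigr => c _.
  by rewrite -Hcu mulr_sumr; apply: eq_bigr => b _; rewrite mulrA.
case: (Dmin E EC (fun x (h : E x) => proj1 h)) => [H0|HDE].
  by move: y0; rewrite (H0 y Ey) eqxx.
by move=> x Dx; case: (HDE x Dx).
Qed.

Lemma corad_homog0 (x : gvec A) : coradical x -> homog 0 x.
Proof.
case=> m [Ds [y [hy e]]] n hn; rewrite e big1 // => r _.
by have [hs [_ Dy]] := hy r; apply: (simple_homog0 hs Dy).
Qed.

End Corad.

Section Alg.
Variable k : fieldType.
Variable H : gdata k.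
Local Notation d := (gdim H 0).
Local Notation G := (gmc H 0 0 0).
Hypothesis HU1 : forall b c : 'I_d, \sum_(u < d) gun H u * G u b c = (b == c)%:R.
Hypothesis HU2 : forall a c : 'I_d, \sum_(u < d) G a u c * gun H u = (a == c)%:R.
Hypothesis HAs : forall a b g c : 'I_d,
  \sum_(e < d) G a b e * G e g c = \sum_(f < d) G b g f * G a f c.

Local Notation m0 := (@mul0 k H).

Lemma m0E (x y : 'rV[k]_d) c : m0 x y 0 c = \sum_a \sum_b x 0 a * y 0 b * G a b c.
Proof. by rewrite mxE. Qed.

Lemma m0Dl c x y z : m0 (c *: x + y) z = c *: m0 x z + m0 y z.
Proof.
apply/rowP => c'; rewrite !mxE mulr_sumr -big_split /=; apply: eq_bigr => a _.
rewrite mulr_sumr -big_split /=; apply: eq_bigr => b _; rewrite !mxE; ring.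
Qed.
Lemma m0Dr c x y z : m0 z (c *: x + y) = c *: m0 z x + m0 z y.
Proof.
apply/rowP => c'; rewrite !mxE mulr_sumr -big_split /=; apply: eq_bigr => a _.
rewrite mulr_sumr -big_split /=; apply: eq_bigr => b _; rewrite !mxE; ring.
Qed.
Lemma m00l x : m0 0 x = 0.
Proof. by apply/rowP => c; rewrite !mxE big1 // => a _; rewrite big1 // => b _; rewrite mxE !mul0r. Qed.
Lemma m00r x : m0 x 0 = 0.
Proof. by apply/rowP => c; rewrite !mxE big1 // => a _; rewrite big1 // => b _; rewrite mxE mulr0 mul0r. Qed.
Lemma m0Bl x y z : m0 (x + y) z = m0 x z + m0 y z.
Proof.
apply/rowP => c; rewrite !mxE -big_split; apply: eq_bigr => a _.
by rewrite -big_split; apply: eq_bigr => b _; rewrite !mxE /=; ring.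
Qed.
Lemma m0Br x y z : m0 z (x + y) = m0 z x + m0 z y.
Proof.
apply/rowP => c; rewrite !mxE -big_split; apply: eq_bigr => a _.
by rewrite -big_split; apply: eq_bigr => b _; rewrite !mxE /=; ring.
Qed.

Definition one : 'rV[k]_d := \row_u gun H u.

Lemma m01l x : m0 one x = x.
Proof.
apply/rowP => c; rewrite !mxE exchange_big /=.
rewrite -[RHS](sum_delta_r (fun b => x 0 b) c); apply: eq_bigr => b _.
rewrite -HU1 mulr_sumr; apply: eq_bigr => u _; rewrite mxE; ring.
Qed.
Lemma m01r x : m0 x one = x.
Proof.
apply/rowP => c; rewrite !mxE.
rewrite -[RHS](sum_delta_r (fun b => x 0 b) c); apply: eq_bigr => a _.
rewrite -HU2 mulr_sumr; apply: eq_bigr => u _; rewrite mxE; ring.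
Qed.

Lemma swap4 (F : 'I_d -> 'I_d -> 'I_d -> 'I_d -> k) :
  \sum_e \sum_g \sum_a \sum_b F e g a b = \sum_a \sum_b \sum_g \sum_e F e g a b.
Proof.
under eq_bigr => e _ do (rewrite exchange_big; under eq_bigr => a _ do rewrite exchange_big).
rewrite exchange_big; apply: eq_bigr => a _; rewrite exchange_big; apply: eq_bigr => b _.
by rewrite exchange_big.
Qed.

Lemma sumL1 (X : 'I_d -> 'I_d -> 'I_d -> k) (Z : 'I_d -> 'I_d -> k) :
  \sum_e \sum_g (\sum_a \sum_b X a b e) * Z e g = \sum_a \sum_b \sum_g \sum_e X a b e * Z e g.
Proof.
rewrite -swap4; apply: eq_bigr => e _; apply: eq_bigr => g _.
rewrite big_distrl; apply: eq_bigr => a _; by rewrite big_distrl.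
Qed.

Lemma sumL2 (Y : 'I_d -> k) (W : 'I_d -> 'I_d -> 'I_d -> k) (V : 'I_d -> 'I_d -> k) :
  \sum_a \sum_f Y a * (\sum_b \sum_g W b g f) * V a f = \sum_a \sum_b \sum_g \sum_f Y a * W b g f * V a f.
Proof.
apply: eq_bigr => a _.
transitivity (\sum_f \sum_b \sum_g Y a * W b g f * V a f).
  apply: eq_bigr => f _; rewrite big_distrr big_distrl; apply: eq_bigr => b _.
  by rewrite big_distrr big_distrl.
rewrite exchange_big; apply: eq_bigr => b _; by rewrite exchange_big.
Qed.

Lemma m0A x y z : m0 (m0 x y) z = m0 x (m0 y z).
Proof.
apply/rowP => c; rewrite !mxE.
under eq_bigr => e _ do under eq_bigr => g _ do rewrite mxE -mulrA.
rewrite (sumL1 (fun a b e => x 0 a * y 0 b * G a b e) (fun e g => z 0 g * G e g c)).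
under [RHS]eq_bigr => a _ do under eq_bigr => f _ do rewrite mxE.
rewrite (sumL2 (fun a => x 0 a) (fun b g f => y 0 b * z 0 g * G b g f) (fun a f => G a f c)).
apply: eq_bigr => a _; apply: eq_bigr => b _; apply: eq_bigr => g _.
transitivity (x 0 a * y 0 b * z 0 g * \sum_e G a b e * G e g c).
  by rewrite mulr_sumr; apply: eq_bigr => e _; ring.
by rewrite HAs mulr_sumr; apply: eq_bigr => f _; ring.
Qed.

Definition Tm (f : 'rV[k]_d) : 'M[k]_d := \matrix_(a, b) \sum_c f 0 c * G a b c.

Lemma sumL3 (F : 'I_d -> k) (X : 'I_d -> 'I_d -> 'I_d -> k) :
  \sum_c F c * (\sum_a \sum_b X a b c) = \sum_a \sum_b \sum_c F c * X a b c.
Proof.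
transitivity (\sum_c \sum_a \sum_b F c * X a b c).
  by apply: eq_bigr => c _; rewrite big_distrr; apply: eq_bigr => a _; rewrite big_distrr.
rewrite exchange_big; apply: eq_bigr => a _; by rewrite exchange_big.
Qed.

Lemma sumL4 (Y : 'I_d -> k) (W : 'I_d -> 'I_d -> 'I_d -> k) (Z : 'I_d -> k) :
  \sum_b (\sum_a Y a * (\sum_c W a b c)) * Z b = \sum_a \sum_b \sum_c Y a * W a b c * Z b.
Proof.
transitivity (\sum_b \sum_a \sum_c Y a * W a b c * Z b).
  apply: eq_bigr => b _; rewrite big_distrl; apply: eq_bigr => a _.
  by rewrite big_distrr big_distrl.
by rewrite exchange_big.
Qed.

Lemma pairing f y x : f *m (m0 y x)^T = y *m Tm f *m x^T.
Proof.
apply/matrixP => i j; rewrite !mxE (ord1 i) (ord1 j).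
under eq_bigr => c _ do rewrite !mxE.
rewrite (sumL3 (fun c => f 0 c) (fun a b c => y 0 a * x 0 b * G a b c)).
under [RHS]eq_bigr => b _ do (rewrite !mxE; under eq_bigr => a _ do rewrite !mxE).
rewrite (sumL4 (fun a => y 0 a) (fun a b c => f 0 c * G a b c) (fun b => x 0 b)).
by apply: eq_bigr => a _; apply: eq_bigr => b _; apply: eq_bigr => c _; ring.
Qed.

Definition Lx (x : 'rV[k]_d) : 'M[k]_d := \matrix_(a < d) m0 (delta_mx 0 a) x.

Lemma m0_Lx c x : m0 c x = c *m Lx x.
Proof.
apply/rowP => c'; rewrite !mxE; apply: eq_bigr => a _; rewrite !mxE.
rewrite [X in _ = _ * X](bigD1 a) //= [X in _ = _ * (_ + X)]big1 ?addr0; last first.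
  move=> a' ha'; rewrite big1 // => b _; rewrite !mxE /=.
  by rewrite (negbTE ha') !mul0r.
rewrite mulr_sumr; apply: eq_bigr => b _; rewrite !mxE /= !eqxx /=; ring.
Qed.

End Alg.

Section Split.
Variable k : fieldType.
Variable H : gdata k.
Local Notation d := (gdim H 0).
Local Notation G := (gmc H 0 0 0).
Hypothesis HU1 : forall b c : 'I_d, \sum_(u < d) gun H u * G u b c = (b == c)%:R.
Hypothesis HU2 : forall a c : 'I_d, \sum_(u < d) G a u c * gun H u = (a == c)%:R.
Hypothesis HAs : forall a b g c : 'I_d,
  \sum_(e < d) G a b e * G e g c = \sum_(f < d) G b g f * G a f c.
Hypothesis HSS : semisimple0 H.
Local Notation m0 := (@mul0 k H).

Definition mcoalg (M : 'M[k]_d) := forall v : 'rV[k]_d, (v <= M)%MS ->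
  (Tm v <= M)%MS /\ ((Tm v)^T <= M)%MS.

Lemma kerT m p (N : 'M[k]_(m, d)) (B : 'M[k]_(p, d)) q (C : 'M[k]_(q, d)) :
  (B <= kermx N^T)%MS -> (C <= N)%MS -> C *m B^T = 0.
Proof.
move/sub_kermxP => hB /submxP [w ->].
by rewrite -mulmxA -[N]trmxK -trmx_mul hB trmx0 mulmx0.
Qed.

Lemma kerT' m p (N : 'M[k]_(m, d)) (B : 'M[k]_(p, d)) q (C : 'M[k]_(q, d)) :
  (B <= kermx N^T)%MS -> (C <= N)%MS -> B *m C^T = 0.
Proof. by move=> h1 h2; rewrite -[LHS]trmxK trmx_mul trmxK (kerT h1 h2) trmx0. Qed.

Lemma kerP m p (K : 'M[k]_(m, d)) (B : 'M[k]_(p, d)) :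
  (forall g : 'rV[k]_d, (g <= K)%MS -> B *m g^T = 0) -> (B <= kermx K^T)%MS.
Proof.
move=> h; apply/sub_kermxP; apply/matrixP => i j; rewrite [RHS]mxE.
have := h (row j K) (row_sub _ _); move/matrixP/(_ i 0); rewrite !mxE => e.
by rewrite -[RHS]e; apply: eq_bigr => c _; rewrite !mxE.
Qed.

Lemma capzero (I J : 'M[k]_d) (x : 'rV[k]_d) : (I :&: J == (0 : 'M[k]_d))%MS ->
  (x <= I)%MS -> (x <= J)%MS -> x = 0.
Proof.
move=> /andP [h _] hI hJ.
have : (x <= (0 : 'M[k]_d))%MS by apply: submx_trans h; rewrite sub_capmx hI hJ.
by rewrite submx0 => /eqP.
Qed.

Definition lid (I : 'M[k]_d) := forall x y : 'rV[k]_d, (x <= I)%MS -> (m0 y x <= I)%MS.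
Definition rid (I : 'M[k]_d) := forall x y : 'rV[k]_d, (x <= I)%MS -> (m0 x y <= I)%MS.

Lemma ideal_of_coalg N : mcoalg N -> lid (kermx N^T) /\ rid (kermx N^T).
Proof.
move=> HN; split => x y hx; apply: kerP => g hg;
  rewrite -[LHS]trmxK trmx_mul trmxK pairing //.
  have [h1 _] := HN g hg.
  by rewrite -mulmxA (kerT hx h1) mulmx0 trmx0.
have [_ h2] := HN g hg.
have e : x *m Tm g = 0 by rewrite -[LHS]trmxK trmx_mul (kerT hx h2) trmx0.
by rewrite e mul0mx trmx0.
Qed.

Lemma coalg_of_ideal K : lid K -> rid K -> mcoalg (kermx K^T).
Proof.
move=> lK rK f hf; split; apply: kerP => g hg.
  apply/row_matrixP => a; rewrite row0 row_mul rowE.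
  rewrite -pairing //; apply: kerT' hf _; exact: lK.
apply/row_matrixP => b; rewrite row0 row_mul -tr_col colE -trmx_mul mulmxA.
have -> : (delta_mx b 0 : 'M[k]_(d, 1)) = (delta_mx 0 b)^T by rewrite trmx_delta.
by rewrite -pairing // (kerT' hf (rK _ _ hg)) trmx0.
Qed.

Lemma sub_full (x : 'rV[k]_d) : (x <= (1%:M : 'M[k]_d))%MS.
Proof. by apply: submx_full; rewrite /row_full mxrank1. Qed.

Lemma split_coalg M N : mcoalg M -> mcoalg N -> (N <= M)%MS -> N != 0 -> ~~ (M <= N)%MS ->
  exists F, mcoalg F /\ (F <= M)%MS /\ (\rank F < \rank M)%N /\ (M <= N + F)%MS.
Proof.
move=> HM HN sNM N0 nMN.
pose I := kermx N^T.
have [lI rI] := ideal_of_coalg HN.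
have [K HK] : exists K : 'M[k]_d, forall x, (forall i, (i <= I)%MS -> m0 i x = 0) <-> (x <= K)%MS.
  apply: mx_of_pred => [i _|c u v h1 h2 i hi]; first exact: m00r.
  by rewrite m0Dr h1 // h2 // scaler0 addr0.
have lK : lid K.
  move=> x y /HK hx; apply/HK => i hi; rewrite -m0A //; apply: hx; exact: rI.
have rK : rid K.
  move=> x y /HK hx; apply/HK => i hi; by rewrite -m0A // hx // m00l.
have [J [lJ [cIJ fIJ]]] := HSS lI.
have : (one H <= I + J)%MS by apply: submx_trans fIJ; apply: sub_full.
case/sub_addsmxP => [[u1 u2] /= e1].
set e := u1 *m I in e1; set f := u2 *m J in e1.
have eI : (e <= I)%MS by apply: submxMl.
have fJ : (f <= J)%MS by apply: submxMl.
have fK : (f <= K)%MS.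
  apply/HK => i hi; apply: (capzero cIJ); [exact: rI | exact: lJ].
have IKfull : forall h : 'rV[k]_d, (h <= I + K)%MS.
  move=> h; rewrite -[h](m01r HU2) e1 m0Br; apply: addmx_sub_adds; first exact: lI.
  apply/HK => i hi; rewrite -m0A //; by move/HK: fK; apply; apply: rI.
have IKcap : forall x : 'rV[k]_d, (x <= I)%MS -> (x <= K)%MS -> x = 0.
  move=> x xI xK.
  have lL : lid (Lx x).
    move=> w y /submxP [c ->]; rewrite -m0_Lx -m0A // m0_Lx; exact: submxMl.
  have [J' [lJ' [cLJ fLJ]]] := HSS lL.
  have : (one H <= Lx x + J')%MS by apply: submx_trans fLJ; apply: sub_full.
  case/sub_addsmxP => [[a b] /= e2].
  have e3 : x = m0 x (b *m J').
    rewrite -{1}[x](m01r HU2) e2 m0Br -m0_Lx -m0A //.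
    by move/HK: xK => -> //; [rewrite add0r | apply: rI].
  apply: (capzero cLJ).
    have hx1 : one H *m Lx x = x by rewrite -m0_Lx m01l.
    by rewrite -{1}hx1 submxMl.
  by rewrite e3; apply: lJ'; apply: submxMl.
pose F := kermx K^T.
have HF : mcoalg F by apply: coalg_of_ideal.
have rI' : \rank I = (d - \rank N)%N by rewrite mxrank_ker mxrank_tr.
have rIK : (\rank I + \rank K)%N = d.
  rewrite -mxrank_sum_cap.
  have -> : \rank (I :&: K)%MS = 0%N.
    apply/eqP; rewrite mxrank_eq0; apply/eqP/row_matrixP => j; rewrite row0.
    apply: IKcap; apply: submx_trans (row_sub j _) _; [exact: capmxSl | exact: capmxSr].
  rewrite addn0; apply/eqP; rewrite eqn_leq rank_leq_col /=.
  rewrite -{1}(mxrank1 k d); apply: mxrankS; apply/row_subP => j; exact: IKfull.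
have rF : \rank F = (d - \rank K)%N by rewrite mxrank_ker mxrank_tr.
have NF0 : forall g : 'rV[k]_d, (g <= N)%MS -> (g <= F)%MS -> g = 0.
  move=> g gN gF.
  have : ((1%:M : 'M[k]_d) <= I + K)%MS by apply/row_subP => j; exact: IKfull.
  case/sub_addsmxP => [[U1 U2] /= e4].
  have trD : forall A B : 'M[k]_d, (A + B)^T = A^T + B^T by move=> A B; apply/matrixP => i j; rewrite !mxE.
  rewrite -[g]mulmx1 -[1%:M]trmxK trmx1 e4 trD (trmx_mul U1 I) (trmx_mul U2 K) mulmxDr !mulmxA.
  by rewrite (kerT (submx_refl I) gN) (sub_kermxP gF) !mul0mx addr0.
have rNF : \rank (N + F)%MS = d.
  have := mxrank_sum_cap N F.
  have -> : \rank (N :&: F)%MS = 0%N.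
    apply/eqP; rewrite mxrank_eq0; apply/eqP/row_matrixP => j; rewrite row0.
    apply: NF0; apply: submx_trans (row_sub j _) _; [exact: capmxSl | exact: capmxSr].
  have := rank_leq_col N; have := rank_leq_col K; lia.
pose Fm := (M :&: F)%MS.
exists Fm; split.
  move=> v; rewrite sub_capmx => /andP [vM vF].
  have [h1 h2] := HM v vM; have [h3 h4] := HF v vF.
  by rewrite !sub_capmx h1 h2 h3 h4.
split; first exact: capmxSl.
have sMNF : (M <= N + Fm)%MS.
  apply/row_subP => j.
  have : (row j M <= N + F)%MS by apply: submx_full; rewrite /row_full rNF.
  case/sub_addsmxP => [[w1 w2] /= e5].
  rewrite e5 addmx_sub_adds ?submxMl // sub_capmx submxMl andbT.
  have -> : w2 *m F = row j M - w1 *m N by rewrite e5 addrC addKr.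
  by rewrite addmx_sub ?row_sub // -mulNmx; apply: submx_trans (submxMl _ _) sNM.
split => //.
have := mxrank_sum_cap N Fm.
have -> : \rank (N :&: Fm)%MS = 0%N.
  apply/eqP; rewrite mxrank_eq0; apply/eqP/row_matrixP => j; rewrite row0.
  apply: NF0; apply: submx_trans (row_sub j _) _; first exact: capmxSl.
  apply: submx_trans (capmxSr _ _) _; exact: capmxSr.
have : (\rank (N + Fm)%MS <= \rank M)%N.
  apply: mxrankS; rewrite addsmx_sub sNM; exact: capmxSl.
have : (0 < \rank N)%N by rewrite lt0n mxrank_eq0.
lia.
Qed.

End Split.

Section SOS.
Variable k : fieldType.
Variable A : gdata k.

Lemma sos_mono (D D' : gvec A -> Prop) x : (forall y, D y -> D' y) ->
  sum_of_simples D x -> sum_of_simples D' x.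
Proof.
move=> hD [m [Ds [y [h e]]]]; exists m, Ds, y; split => // r.
by have [h1 [h2 h3]] := h r; split => //; split => // z /h2 /hD.
Qed.

Lemma sos_zero (D : gvec A -> Prop) : sum_of_simples D (gzero A).
Proof.
exists 0%N, (fun _ _ => False), (fun _ => gzero A); split; first by case.
by move=> n; rewrite big_ord0.
Qed.

Lemma sos_single (D D' : gvec A -> Prop) x : simple_subcoalg D' -> (forall y, D' y -> D y) ->
  D' x -> sum_of_simples D x.
Proof.
move=> hs hD hx; exists 1%N, (fun _ => D'), (fun _ => x); split => // n.
by rewrite big_ord1.
Qed.

Lemma sos_add (D : gvec A -> Prop) x y : sum_of_simples D x -> sum_of_simples D y ->
  sum_of_simples D (fun n => x n + y n).
Proof.
move=> [m1 [Ds1 [y1 [h1 e1]]]] [m2 [Ds2 [y2 [h2 e2]]]].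
exists (m1 + m2)%N, (fun r => match split r with inl r1 => Ds1 r1 | inr r2 => Ds2 r2 end),
  (fun r => match split r with inl r1 => y1 r1 | inr r2 => y2 r2 end); split.
  by move=> r; case: (split r) => r'; [apply: h1 | apply: h2].
move=> n; rewrite big_split_ord e1 e2; congr (_ + _); apply: eq_bigr => r _.
  by rewrite -[lshift m2 r]/(unsplit (inl r)) unsplitK.
by rewrite -[rshift m1 r]/(unsplit (inr r)) unsplitK.
Qed.
End SOS.

Section P3a.
Variable k : fieldType.
Variable H : gdata k.
Local Notation d := (gdim H 0).
Local Notation G := (gmc H 0 0 0).
Local Notation L := (gdual H).
Hypothesis Hgm : forall i j n a b c, (i + j)%N != n -> gmc H i j n a b c = 0.
Hypothesis HU1 : forall b c : 'I_d, \sum_(u < d) gun H u * G u b c = (b == c)%:R.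
Hypothesis HU2 : forall a c : 'I_d, \sum_(u < d) G a u c * gun H u = (a == c)%:R.
Hypothesis HAs : forall a b g c : 'I_d,
  \sum_(e < d) G a b e * G e g c = \sum_(f < d) G b g f * G a f c.
Hypothesis HSS : semisimple0 H.

Lemma HgdL : forall n i j c a b, (i + j)%N != n -> gdc L n i j c a b = 0.
Proof. by move=> n i j c a b h; apply: Hgm. Qed.

Definition DM (M : 'M[k]_d) (x : gvec L) := homog 0 x /\ (x 0%N <= M)%MS.

Lemma gcomulL0 (v : 'rV[k]_d) : gcomul (gvecn (A := L) (n := 0) v) 0 0 = Tm v.
Proof.
by rewrite (gcomul_gvecn HgdL); apply/matrixP => a b; rewrite !mxE.
Qed.

Lemma gcomulLN (v : 'rV[k]_d) i j : (i != 0%N) || (j != 0%N) ->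
  gcomul (gvecn (A := L) (n := 0) v) i j = 0.
Proof.
move=> h; rewrite (gcomul_gvecn HgdL); apply/matrixP => a b; rewrite !mxE.
rewrite big1 // => c _; rewrite /= Hgm ?mulr0 //.
by case: i j h {a b} => [|i] [|j].
Qed.

Lemma DM_sub M : subspace (DM M).
Proof.
split; first by move=> x [hx _]; exact: homog_fsupp hx.
split; first by split => //; rewrite sub0mx.
move=> c x y [hx Mx] [hy My]; split.
  by move=> m hm; rewrite hx ?hy ?scaler0 ?addr0.
by rewrite addmx_sub ?scalemx_sub.
Qed.

Lemma T1 M : mcoalg M -> subcoalg (DM M).
Proof.
move=> HM; split; first exact: DM_sub.
move=> x [hx xM]; rewrite (homog_gvecnE hx).
set v : 'rV[k]_d := x 0%N; set T := @Tm k H v.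
have [h1 h2] : (T <= M)%MS /\ (T^T <= M)%MS := HM _ xM.
pose Y := (pinvmx M)^T *m T.
have eT : T = M^T *m Y.
  rewrite /Y mulmxA -trmx_mul; apply: trmx_inj; by rewrite [RHS]trmx_mul trmxK mulmxA mulmxKpV.
have YM : (Y <= M)%MS by apply: submx_trans h1; apply: submxMl.
exists d, (fun r => gvecn (A := L) (n := 0) (row r M)), (fun r => gvecn (A := L) (n := 0) (row r Y)).
split.
  move=> r; split; (split; [exact: homog_gvecn | rewrite gvecn_eq]); first exact: row_sub.
  by apply: submx_trans YM; apply: row_sub.
move=> i j.
case: (eqVneq i 0%N) => [->|hi]; last first.
  rewrite gcomulLN ?hi // big1 // => r _; by rewrite gvecn_neq // trmx0 mul0mx.
case: (eqVneq j 0%N) => [->|hj]; last first.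
  rewrite gcomulLN ?hj ?orbT // big1 // => r _; by rewrite (gvecn_neq _ hj) mulmx0.
rewrite gcomulL0 -/v -/T eT -sum_colrow; apply: eq_bigr => r _.
by rewrite !gvecn_eq tr_row.
Qed.

Lemma T2 M (E : gvec L -> Prop) : subcoalg E -> (forall x, E x -> DM M x) ->
  exists N, mcoalg N /\ forall x, E x <-> DM N x.
Proof.
move=> [[Ef [E0 EL]] Eco] EM.
have [N HN] : exists N : 'M[k]_d, forall v, E (gvecn (A := L) (n := 0) v) <-> (v <= N)%MS.
  apply: mx_of_pred; first by rewrite gvecn0.
  by move=> c u v hu hv; rewrite gvecnL; apply: EL.
have EN : forall x, E x <-> DM N x.
  move=> x; split.
    move=> Ex; have [hx _] := EM x Ex; split => //.
    by apply/HN; rewrite -(homog_gvecnE hx).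
  by case=> hx /HN; rewrite -(homog_gvecnE hx).
exists N; split => // v /HN Ev.
have [m [u [w [huw e]]]] := Eco _ Ev.
have e0 := e 0%N 0%N; rewrite gcomulL0 in e0.
have uN : forall r, (u r 0%N <= N)%MS by move=> r; have [/EN [_ ?] _] := huw r.
have wN : forall r, (w r 0%N <= N)%MS by move=> r; have [_ /EN [_ ?]] := huw r.
rewrite e0; split.
  by apply: summx_sub => r _; apply: submx_trans (wN r); apply: submxMl.
have trS : forall (F : 'I_m -> 'M[k]_d), (\sum_r F r)^T = \sum_r (F r)^T.
  by move=> F; apply/matrixP => a b; rewrite !mxE !summxE; apply: eq_bigr => r _; rewrite mxE.
rewrite trS; apply: summx_sub => r _; rewrite trmx_mul trmxK.
by apply: submx_trans (uN r); apply: submxMl.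
Qed.

End P3a.

Section P3a2.
Variable k : fieldType.
Variable H : gdata k.
Local Notation d := (gdim H 0).
Local Notation G := (gmc H 0 0 0).
Local Notation L := (gdual H).
Hypothesis Hgm : forall i j n a b c, (i + j)%N != n -> gmc H i j n a b c = 0.
Hypothesis HU1 : forall b c : 'I_d, \sum_(u < d) gun H u * G u b c = (b == c)%:R.
Hypothesis HU2 : forall a c : 'I_d, \sum_(u < d) G a u c * gun H u = (a == c)%:R.
Hypothesis HAs : forall a b g c : 'I_d,
  \sum_(e < d) G a b e * G e g c = \sum_(f < d) G b g f * G a f c.
Hypothesis HSS : semisimple0 H.

Lemma main_ind : forall r (M : 'M[k]_d), (\rank M <= r)%N -> mcoalg M ->
  forall v : 'rV[k]_d, (v <= M)%MS -> sum_of_simples (DM M) (gvecn (A := L) (n := 0) v).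
Proof.
elim=> [|r IH] M hr HM v vM.
  move: hr; rewrite leqn0 mxrank_eq0 => /eqP M0; subst M.
  move: vM; rewrite submx0 => /eqP ->; rewrite gvecn0; exact: sos_zero.
case: (classic (exists N, mcoalg N /\ (N <= M)%MS /\ N != 0 /\ ~~ (M <= N)%MS)).
  case=> N [HN [sNM [N0 nMN]]].
  have [F [HF [sFM [rF sMNF]]]] := split_coalg HU1 HU2 HAs HSS HM HN sNM N0 nMN.
  have rN : (\rank N < \rank M)%N by apply: rank_ltmx; rewrite ltmxE sNM.
  have := submx_trans vM sMNF; case/sub_addsmxP => [[w1 w2] /= ev].
  have -> : gvecn (A := L) (n := 0) v = (fun m => gvecn (A := L) (n := 0) (w1 *m N) m + gvecn (A := L) (n := 0) (w2 *m F) m).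
    rewrite ev -{1}[w1 *m N]scale1r gvecnL.
    by apply: functional_extensionality_dep => m; rewrite scale1r.
  apply: sos_add.
    apply: (sos_mono (D := DM N)); first by move=> y [hy yN]; split => //; exact: submx_trans sNM.
    by apply: (IH N) => //; [lia | apply: submxMl].
  apply: (sos_mono (D := DM F)); first by move=> y [hy yN]; split => //; exact: submx_trans sFM.
  by apply: (IH F) => //; [lia | apply: submxMl].
move=> Hno.
case: (eqVneq M 0) => [M0|M0].
  move: vM; rewrite M0 submx0 => /eqP ->; rewrite gvecn0; exact: sos_zero.
apply: (sos_single (D' := DM M)) => //; last by split; [exact: homog_gvecn | rewrite gvecn_eq].
split; first exact: T1.
split.
  have [j hj] : exists j, row j M != 0.
    apply: NNPP => h; move/eqP: M0; apply; apply/row_matrixP => j; rewrite row0.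
    by apply: NNPP => h'; apply: h; exists j; apply/eqP.
  exists (gvecn (A := L) (n := 0) (row j M)); split.
    by split; [exact: homog_gvecn | rewrite gvecn_eq row_sub].
  by exists 0%N; rewrite gvecn_eq.
move=> E EC EM.
have [N [HN EN]] := T2 Hgm EC EM.
have sNM : (N <= M)%MS.
  apply/row_subP => j.
  have : E (gvecn (A := L) (n := 0) (row j N)).
    by apply/EN; split; [exact: homog_gvecn | rewrite gvecn_eq row_sub].
  by move/EM => [_]; rewrite gvecn_eq.
case: (eqVneq N 0) => [N0|N0].
  left => x /EN [hx]; rewrite N0 submx0 => /eqP x0 n.
  by case: (eqVneq n 0%N) => [->|hn] //; apply: hx.
right => x [hx xM]; apply/EN; split => //.
have : (M <= N)%MS by apply: NNPP => h; apply: Hno; exists N; do 3!split => //; apply/negP.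
by move/(submx_trans xM).
Qed.

Lemma homog0_coradL (x : gvec L) : homog 0 x -> coradical x.
Proof.
move=> hx; rewrite (homog_gvecnE hx).
apply: (sos_mono (D := DM (1%:M : 'M[k]_d))).
  by move=> y [hy _]; exact: homog_fsupp hy.
apply: (main_ind (r := d)) => //; first exact: rank_leq_col.
  by move=> v _; split; apply: submx_full; rewrite /row_full mxrank1.
exact: sub_full.
Qed.

End P3a2.

Unset Implicit Arguments.

Theorem theorem2p2 (k : fieldType) (H : gdata k) :
  is_ghopf H ->
  (forall x : gvec H, homog 0 x <-> coradical x) ->
  cosemisimple (@homog k H 0) ->
  semisimple0 H ->
  (coradically_graded H /\ gen01 H <->
   coradically_graded (gdual H) /\ gen01 (gdual H)).
Proof.
move=> [Hgm [Hgd [HA [HUl [HUr [HCo [HCl [HCr _]]]]]]]] Hcor _ HSS.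
have HgdL : forall n i j c a b, (i + j)%N != n -> gdc (gdual H) n i j c a b = 0.
  by move=> n i j c a b h; apply: Hgm.
have HgmL : forall i j n a b c, (i + j)%N != n -> gmc (gdual H) i j n a b c = 0.
  by move=> i j n a b c h; apply: Hgd.
have HAL : forall i j l n a b g c,
     \sum_(e < gdim (gdual H) (i + j)) gmc (gdual H) i j (i + j) a b e * gmc (gdual H) (i + j) l n e g c
   = \sum_(f < gdim (gdual H) (j + l)) gmc (gdual H) j l (j + l) b g f * gmc (gdual H) i (j + l) n a f c.
  move=> i j l n a b g c /=.
  have := HCo n i j l c a b g.
  under eq_bigr => e _ do rewrite mulrC.
  under [X in _ = X -> _]eq_bigr => f _ do rewrite mulrC.
  by [].
have HcuL : forall n c b, \sum_(u < gdim (gdual H) 0) gdc (gdual H) n n 0 c b u * gcu (gdual H) u = (c == b)%:R.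
  by move=> n c b /=; rewrite HUr eq_sym.
have HcorL : forall x : gvec (gdual H), homog 0 x <-> coradical x.
  move=> x; split; first exact: (homog0_coradL Hgm (HUl 0%N) (HUr 0%N) (HA 0%N 0%N 0%N 0%N) HSS).
  exact: (corad_homog0 HgdL HcuL).
split.
  case=> cgH gH.
  have InjH := corad_grad_Inj Hgd Hcor cgH.
  have SurjL := Inj_Surj_dual InjH.
  have SurjH := gen01_Surj Hgm HA gH.
  have InjL : Inj (gdual H) := Surj_dual_Inj (A := gdual H) SurjH.
  split; first exact: (Inj_corad_grad HgdL HcorL InjL).
  exact: (Surj_gen01 HgmL SurjL).
case=> cgL gL.
have InjL := corad_grad_Inj HgdL HcorL cgL.
have SurjH : Surj H := Inj_Surj_dual InjL.
have SurjL := gen01_Surj HgmL HAL gL.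
have InjH := Surj_dual_Inj SurjL.
split; first exact: (Inj_corad_grad Hgd Hcor InjH).
exact: (Surj_gen01 Hgm SurjH).
Qed.
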